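(* The knowledge state algorithm $K_2$ for the $2$-cache problem is $\tfrac32$-competitive: there is a constant $K$ such that $E(\mathrm{cost}_{K_2}(\varrho))\le\tfrac32\,\mathrm{cost}_{\mathrm{opt}}(\varrho)+K$ for every finite request sequence $\varrho$.
   Context: The $k$-cache problem: there is an infinite set $P$ of pages; the state set $\mathcal X$ is the set of $k$-element subsets of $P$ (cache contents), with a given initial cache $s^0$; the requests are the pages, $\mathcal R=P$; $d(x,y)=|x\setminus y|$; and $\mathrm{cost}(x,r,y)=2$ if $x=y$ and $r\notin x$; $\mathrm{cost}(x,r,y)=d(x,y)$ if $r\in x$ or $r\in y$; $\mathrm{cost}(x,r,y)=d(x,y)+1$ otherwise. For $\varrho=r^1\dots r^n$, $\mathrm{cost}_{\mathrm{opt}}(\varrho)$ is the minimum of $\sum_t\mathrm{cost}(x^{t-1},r^t,x^t)$ over $x^1,\dots,x^n\in\mathcal X$ with $x^0=s^0$. $\Pi$ is the set of finitely supported probability distributions on $\mathcal X$; for $\pi,\pi'\in\Pi$, $\mathrm{cost}(\pi,r,\pi')$ is the minimum of $\sum_{x,y}\gamma(x,y)\mathrm{cost}(x,r,y)$ over distributions $\gamma$ on $\mathrm{supp}(\pi)\times\mathrm{supp}(\pi')$ with marginals $\pi,\pi'$. Bar notation: a string $\alpha$ of distinct page names and exactly $k$ bars, with at least $i$ page names to the left of the $i$-th bar, denotes the estimator $\omega_\alpha(y)=\min_{x\in S_\alpha}d(x,y)$, where $S_\alpha$ is the set of configurations $x$ such that for each $i=1,\dots,k$ at least $i$ elements of $x$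 are written to the left of the $i$-th bar. Algorithm $K_2$ ($k=2$; $a,b,c,d$ always denote distinct pages). It is a randomized algorithm whose state is a pair (distribution, estimator). States: $A^{a,b}=(\{a,b\},\ ab||)$ (point mass on $\{a,b\}$; $A^{a,b}=A^{b,a}$), and $B^{a,b,c}=(\tfrac12\{a,b\}+\tfrac12\{a,c\},\ a|bc|)$ ($B^{a,b,c}=B^{a,c,b}$). Initial state $A^{a,b}$ where $s^0=\{a,b\}$. Transitions: from $A^{a,b}$: request $a$ or $b$: stay; request $c\notin\{a,b\}$: go to $B^{c,a,b}$. From $B^{a,b,c}$: request $a$: stay; request $b$: go to $A^{b,a}$; request $c$: go to $A^{c,a}$; request $d\notin\{a,b,c\}$: go to each of $A^{d,a},A^{d,b},A^{d,c}$ with probability $\tfrac13$. The cost of a step from state $(\pi,\omega)$ on request $r$, whose successor states $(\pi_i,\omega_i)$ have probabilities $\lambda_i$, is $\mathrm{cost}(\pi,r,\sum_i\lambda_i\pi_i)$; $\mathrm{cost}_{K_2}(\varrho)$ is the (random) sum of step costs. *)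

(* Defs.v *)
From HB Require Import structures.
From mathcomp Require Import all_boot all_order all_algebra.
From mathcomp Require Import finmap.
From mathcomp Require Import boolp classical_sets reals.
Set Implicit Arguments. Unset Strict Implicit. Unset Printing Implicit Defensive.
Import Order.TTheory GRing.Theory Num.Theory.
Local Open Scope ring_scope.

Section KCache.
Variables (R : realType) (P : choiceType).

Definition conf := {fset P}.
Definition is_conf2 (x : conf) : bool := (#|` x |%fset == 2)%N.

Definition dist (x y : conf) : nat := #|` (x `\` y)%fset |%fset.

Definition cost (x : conf) (r : P) (y : conf) : R :=
  if (x == y) && (r \notin x) then 2
  else if (r \in x) || (r \in y) then (dist x y)%:R
  else (dist x y)%:R + 1.

(** A finitely supported (probability) distribution on configurations,
    represented as a finite weighted formal sum  sum_i w_i [x_i]. *)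
Definition fdist := seq (R * conf).
Definition mass (pi : fdist) (x : conf) : R := \sum_(p <- pi | p.2 == x) p.1.

Definition coupling (pi pi' : fdist) (gamma : seq (R * (conf * conf))) : Prop :=
  [/\ forall g, g \in gamma -> 0 <= g.1,
      forall g, g \in gamma -> mass pi g.2.1 != 0 /\ mass pi' g.2.2 != 0,
      forall x, \sum_(g <- gamma | g.2.1 == x) g.1 = mass pi x &
      forall y, \sum_(g <- gamma | g.2.2 == y) g.1 = mass pi' y].

Definition dcost (pi : fdist) (r : P) (pi' : fdist) : R :=
  inf [set c : R | exists gamma, coupling pi pi' gamma /\
                   c = \sum_(g <- gamma) g.1 * cost g.2.1 r g.2.2].

Fixpoint sched_cost (x0 : conf) (rho : seq P) (xs : seq conf) : R :=
  match rho, xs with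
  | r :: rho', y :: xs' => cost x0 r y + sched_cost y rho' xs'
  | _, _ => 0
  end.

Definition cost_opt (s0 : conf) (rho : seq P) : R :=
  inf [set c : R | exists xs : seq conf,
         [/\ size xs = size rho, all is_conf2 xs & c = sched_cost s0 rho xs]].

(** States of K_2 (the estimator component does not influence transitions
    or costs).
    SA a b  = A^{a,b} : point mass on {a,b}
    SB a b c = B^{a,b,c} : 1/2 {a,b} + 1/2 {a,c} *)
Inductive k2state := SA of P & P | SB of P & P & P.

Definition k2dist (s : k2state) : fdist :=
  match s with
  | SA a b => [:: (1, [fset a; b]%fset)]
  | SB a b c => [:: (2^-1, [fset a; b]%fset); (2^-1, [fset a; c]%fset)]
  end.

Definition k2trans (s : k2state) (r : P) : seq (R * k2state) :=
  match s with
  | SA a b => if (r == a) || (r == b) then [:: (1, SA a b)]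
              else [:: (1, SB r a b)]
  | SB a b c =>
      if r == a then [:: (1, SB a b c)]
      else if r == b then [:: (1, SA b a)]
      else if r == c then [:: (1, SA c a)]
      else [:: (3^-1, SA r a); (3^-1, SA r b); (3^-1, SA r c)]
  end.

Definition mixture (succ : seq (R * k2state)) : fdist :=
  flatten [seq [seq (p.1 * q.1, q.2) | q <- k2dist p.2] | p <- succ].

Definition k2step_cost (s : k2state) (r : P) : R :=
  dcost (k2dist s) r (mixture (k2trans s r)).

Fixpoint k2_expected_cost (s : k2state) (rho : seq P) : R :=
  match rho with
  | [::] => 0
  | r :: rho' => k2step_cost s r +
                 \sum_(p <- k2trans s r) p.1 * k2_expected_cost p.2 rho'
  end.

End KCache.

(* Main.v *)
Require Import Defs.
From HB Require Import structures.
From mathcomp Require Import all_boot all_order all_algebra.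
From mathcomp Require Import finmap.
From mathcomp Require Import boolp classical_sets reals.
From mathcomp Require Import zify ring lra.
Import Order.TTheory GRing.Theory Num.Theory.
Local Open Scope ring_scope.
Local Open Scope fset_scope.
Set Implicit Arguments. Unset Strict Implicit. Unset Printing Implicit Defensive.

Lemma dist2 (P : choiceType) (p q : P) (y : {fset P}) :
  p != q -> dist [fset p; q] y = ((p \notin y) + (q \notin y))%N.
Proof.
move=> pq; rewrite /dist.
case: (boolP (p \in y)) => py; case: (boolP (q \in y)) => qy /=.
- have -> : [fset p; q] `\` y = fset0.
    apply/fsetP => z; rewrite !inE; case: (eqVneq z p) => [->|zp]; first by rewrite py.
    by case: (eqVneq z q) => [->|]; rewrite ?qy ?andbF.
  by rewrite cardfs0.
- have -> : [fset p; q] `\` y = [fset q].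
    apply/fsetP => z; rewrite !inE; case: (eqVneq z p) => [->|zp]; first by rewrite py (negbTE pq).
    by case: (eqVneq z q) => [->|]; rewrite ?qy ?andbF.
  by rewrite cardfs1.
- have -> : [fset p; q] `\` y = [fset p].
    apply/fsetP => z; rewrite !inE; case: (eqVneq z p) => [->|zp]; first by rewrite py.
    by case: (eqVneq z q) => [->|]; rewrite ?qy ?andbF.
  by rewrite cardfs1.
- have -> : [fset p; q] `\` y = [fset p; q].
    apply/fsetP => z; rewrite !inE; case: (eqVneq z p) => [->|zp]; first by rewrite py.
    by case: (eqVneq z q) => [->|]; rewrite ?qy ?andbF.
  by rewrite cardfs2 pq.
Qed.

Lemma dist_tri (P : choiceType) (x y z : {fset P}) :
  (dist x z <= dist x y + dist y z)%N.
Proof.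
rewrite /dist.
have sub : x `\` z `<=` (x `\` y) `|` (y `\` z).
  apply/fsubsetP => w; rewrite !inE; by case: (w \in y); case: (w \in z); case: (w \in x).
apply: leq_trans (fsubset_leq_card sub) _.
by rewrite cardfsU leq_subr.
Qed.

Lemma neqC (T : eqType) (x y : T) : x != y -> y != x.
Proof. by rewrite eq_sym. Qed.

Lemma conf2_pair (P : choiceType) (x : conf P) :
  is_conf2 x -> exists p q, p != q /\ x = [fset p; q].
Proof.
rewrite /is_conf2 => /eqP cx.
have : x != fset0 by apply/eqP => x0; rewrite x0 cardfs0 in cx.
case/fset0Pn => p px.
have /cardfs1P [q hq] : #|` x `\ p| == 1%N by move: (cardfsD1 p x); rewrite px cx add1n => -[<-].
have qx : q \in x `\ p by rewrite hq fset11.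
exists p, q; split.
  by move: qx; rewrite !inE eq_sym => /andP [].
by rewrite -hq fsetD1K.
Qed.

Lemma cost_in (R : realType) (P : choiceType) (x y : conf P) r :
  r \in y -> cost R x r y = (dist x y)%:R.
Proof.
move=> ry; rewrite /cost; case: (eqVneq x y) => [->|_] /=; by rewrite ry ?orbT.
Qed.

Lemma mass_ge0 (R : realType) (P : choiceType) (pi : fdist R P) x :
  all (fun p => 0 < p.1) pi -> 0 <= mass pi x.
Proof.
move=> hp; rewrite /mass big_seq_cond; apply: sumr_ge0 => p /andP [pin _].
by apply: ltW; move/allP: hp => /(_ p pin).
Qed.

Lemma mass_neq0 (R : realType) (P : choiceType) (pi : fdist R P) x :
  all (fun p => 0 < p.1) pi -> x \in map snd pi -> mass pi x != 0.
Proof.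
elim: pi => [//|p pi IH] /= /andP [p0 hp]; rewrite inE /mass big_cons.
case: (eqVneq x p.2) => [->|nx] /=.
  have m0 := @mass_ge0 R P pi p.2 hp; rewrite /mass in m0.
  move=> _; apply: lt0r_neq0; exact: ltr_wpDr m0 p0.
by move=> xi; apply: IH.
Qed.

Lemma mk_coupling (R : realType) (P : choiceType) (pi pi' : fdist R P) gamma :
  all (fun g => 0 <= g.1) gamma ->
  all (fun p => 0 < p.1) pi -> all (fun p => 0 < p.1) pi' ->
  all (fun g : R * (conf P * conf P) => (g.2.1 \in map snd pi) && (g.2.2 \in map snd pi')) gamma ->
  (forall x, \sum_(g <- gamma | g.2.1 == x) g.1 = mass pi x) ->
  (forall y, \sum_(g <- gamma | g.2.2 == y) g.1 = mass pi' y) ->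
  coupling pi pi' gamma.
Proof.
move=> /allP g0 hp hp' /allP hg m1 m2; split => //.
move=> g /hg /andP [h1 h2]; split; exact: mass_neq0.
Qed.

Lemma dcost_le (R : realType) (P : choiceType) (pi pi' : fdist R P) r gamma :
  coupling pi pi' gamma ->
  dcost pi r pi' <= \sum_(g <- gamma) g.1 * cost R g.2.1 r g.2.2.
Proof.
move=> hc; rewrite /dcost.
have lb : has_lbound [set c : R | exists gamma, coupling pi pi' gamma /\
                   c = \sum_(g <- gamma) g.1 * cost R g.2.1 r g.2.2].
  exists 0 => c [g [[g0 _ _ _] ->]].
  rewrite big_seq; apply: sumr_ge0 => i ig; apply: mulr_ge0; first exact: g0.
  rewrite /cost; case: ifP => _; first by [].
  by case: ifP => _; rewrite ?addr_ge0.
by apply: (ge_inf lb); exists gamma.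
Qed.

Local Open Scope ring_scope.
Definition wf (P : choiceType) (s : k2state P) : bool :=
  match s with
  | SA a b => a != b
  | SB a b c => [&& a != b, a != c & b != c]
  end.

Definition Phi (R : realType) (P : choiceType) (s : k2state P) (y : conf P) : R :=
  match s with
  | SA a b => 3 / 2 * (dist [fset a; b] y)%:R
  | SB a b c => 3 / 2 * (minn (dist [fset a; b] y) (dist [fset a; c] y))%:R + 2^-1
  end.

Lemma Phi_lip (R : realType) (P : choiceType) (s : k2state P) x y :
  Phi R s y <= Phi R s x + 3 / 2 * (dist x y)%:R.
Proof.
case: s => [a b|a b c] /=.
  have h : (dist [fset a; b] y <= dist [fset a; b] x + dist x y)%N by apply: dist_tri.
  move: h; rewrite -(ler_nat R) natrD => h; lra.
have h1 : (dist [fset a; b] y <= dist [fset a; b] x + dist x y)%N by apply: dist_tri.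
have h2 : (dist [fset a; c] y <= dist [fset a; c] x + dist x y)%N by apply: dist_tri.
have h : (minn (dist [fset a; b] y) (dist [fset a; c] y) <=
          minn (dist [fset a; b] x) (dist [fset a; c] x) + dist x y)%N by lia.
move: h; rewrite -(ler_nat R) natrD => h; lra.
Qed.

Lemma ler_sum_all (R : realType) (T : Type) (l : seq T) (f g : T -> R) :
  all (fun p => f p <= g p) l -> \sum_(p <- l) f p <= \sum_(p <- l) g p.
Proof.
elim: l => [|p l IH] /=; first by rewrite !big_nil.
by case/andP => h1 h2; rewrite !big_cons lerD // IH.
Qed.

Lemma trans_props (R : realType) (P : choiceType) (s : k2state P) r :
  wf s ->
  [/\ all (fun p => 0 <= p.1) (k2trans R s r),
      \sum_(p <- k2trans R s r) p.1 = 1 &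
      all (fun p => wf p.2) (k2trans R s r)].
Proof.
case: s => [a b|a b c] /=.
  move=> ab; case: ifP => hr /=; rewrite ?big_cons ?big_nil ?addr0 ?ler01 ?andbT //.
  by move/negbT/norP: hr => [ra rb]; rewrite ra rb ab.
case/and3P => ab ac bc.
case: (eqVneq r a) => [_|ra] /=.
  by rewrite ?big_cons ?big_nil ?addr0 ?ler01 ab ac bc.
case: (eqVneq r b) => [_|rb] /=.
  by rewrite ?big_cons ?big_nil ?addr0 ?ler01 eq_sym ab.
case: (eqVneq r c) => [_|rc] /=.
  by rewrite ?big_cons ?big_nil ?addr0 ?ler01 eq_sym ac.
rewrite !big_cons big_nil /= ra rb rc invr_ge0 ler0n; split => //. by rewrite addr0; field.
Qed.

Definition EPhi (R : realType) (P : choiceType) (s : k2state P) r (y : conf P) : R :=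
  \sum_(p <- k2trans R s r) p.1 * Phi R p.2 y.

Lemma EPhi_lip (R : realType) (P : choiceType) (s : k2state P) r x y :
  wf s -> EPhi R s r y <= EPhi R s r x + 3 / 2 * (dist x y)%:R.
Proof.
move=> ws; have [w0 w1 _] := trans_props R r ws.
have e : 3 / 2 * (dist x y)%:R = \sum_(p <- k2trans R s r) p.1 * (3 / 2 * (dist x y)%:R :> R).
  by rewrite -mulr_suml w1 mul1r.
rewrite /EPhi e -big_split /=.
apply: ler_sum_all; move: w0; apply: sub_all => p p0 /=.
rewrite -mulrDr; apply: ler_wpM2l => //; exact: Phi_lip.
Qed.

Lemma detour (R : realType) (P : choiceType) (x y : conf P) r :
  is_conf2 x -> is_conf2 y -> r \notin x -> r \notin y ->
  exists z, [/\ is_conf2 z, r \in z &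
     ((dist x z + dist z y)%:R <= cost R x r y :> R)].
Proof.
move=> cx cy hrx hry.
have costE : cost R x r y = if x == y then 2 else (dist x y)%:R + 1.
  by rewrite /cost (negbTE hrx) (negbTE hry) /= andbT.
rewrite costE; case/conf2_pair: cx hrx costE => p [q [pq ->]].
rewrite in_fset2 => /norP [rp rq] _.
case: (boolP (p \in y)) => py; last first.
  exists [fset r; q]; split; first by rewrite /is_conf2 cardfs2 rq.
    by rewrite fset21.
  case: eqP => [e|_]; first by move: py; rewrite -e fset21.
  rewrite !dist2 // ?in_fset2 ?eqxx ?(negbTE pq) ?(negbTE (neqC rp)) ?(negbTE rq) ?hry py ?orbT /=.
  case: (q \in y); rewrite /= natr1 ler_nat //.
case: (boolP (q \in y)) => qy; last first.
  exists [fset r; p]; split; first by rewrite /is_conf2 cardfs2 rp.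
    by rewrite fset21.
  case: eqP => [e|_]; first by move: qy; rewrite -e fset22.
  rewrite !dist2 // ?in_fset2 ?eqxx ?(negbTE pq) ?(negbTE (neqC rq)) ?(negbTE rp) ?hry py qy ?orbT /=.
  by rewrite (negbTE (neqC pq)) natr1 ler_nat.
have exy : [fset p; q] = y.
  case/conf2_pair: cy py qy hry => u [v [uv ->]].
  rewrite !in_fset2 => /orP[/eqP pu|/eqP pu] /orP[/eqP qv|/eqP qv] _; subst.
  - by rewrite eqxx in pq.
  - by [].
  - by rewrite fsetUC.
  - by rewrite eqxx in pq.
exists [fset r; q]; split; first by rewrite /is_conf2 cardfs2 rq.
  by rewrite fset21.
rewrite exy eqxx -exy.
rewrite !dist2 // ?in_fset2 ?eqxx ?(negbTE pq) ?(negbTE (neqC rp)) ?(negbTE (neqC rq)) ?(negbTE rq) ?orbT /=.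
by rewrite (negbTE rp) /= ler_nat.
Qed.

Lemma key (R : realType) (P : choiceType) (c : R) (F G : conf P -> R) r x y :
  (forall z, is_conf2 z -> r \in z -> c + F z <= G z) ->
  (forall u v, F v <= F u + 3 / 2 * (dist u v)%:R) ->
  (forall u v, G v <= G u + 3 / 2 * (dist u v)%:R) ->
  is_conf2 x -> is_conf2 y -> c + F y <= 3 / 2 * cost R x r y + G x.
Proof.
move=> M LF LG cx cy.
case: (boolP (r \in y)) => ry.
  rewrite cost_in //; have := M y cy ry; have := LG x y; lra.
case: (boolP (r \in x)) => rx.
  have -> : cost R x r y = (dist x y)%:R by rewrite /cost rx /= andbF.
  have := M x cx rx; have := LF x y; lra.
have [z [cz rz hz]] := detour R cx cy rx ry.
have := M z cz rz; have := LF z y; have := LG x z; move: hz; rewrite natrD; lra.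
Qed.

Lemma minE (P : choiceType) (a b c : P) (y : conf P) :
  a != b -> a != c ->
  minn (dist [fset a; b] y) (dist [fset a; c] y) =
  ((a \notin y) + ((b \notin y) && (c \notin y)))%N.
Proof.
move=> ab ac; rewrite !dist2 //.
by case: (a \in y); case: (b \in y); case: (c \in y).
Qed.

Ltac neqs := repeat match goal with
  | H : is_true (?x != ?x) |- _ => by rewrite eqxx in H
  | H : is_true (?x != ?y) |- _ =>
      rewrite ?(negbTE H) ?(negbTE (neqC H)); clear H
  end.

Ltac coup := apply: mk_coupling => /=;
  [ rewrite ?mul1r ?mulr1 ?ler01 ?invr_ge0 ?ler0n //
  | rewrite ?mul1r ?mulr1 ?ltr01 ?invr_gt0 ?ltr0n //
  | rewrite ?mul1r ?mulr1 ?ltr01 ?invr_gt0 ?ltr0n //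
  | rewrite !inE ?eqxx ?orbT //
  | let x := fresh "x" in move=> x; rewrite /mass !big_cons !big_nil /=;
    repeat match goal with |- context [if ?b then _ else _] => case: b end; lra
  | let x := fresh "x" in move=> x; rewrite /mass !big_cons !big_nil /=;
    repeat match goal with |- context [if ?b then _ else _] => case: b end; lra ].

Lemma step_SA_stay (R : realType) (P : choiceType) (a b r : P) :
  a != b -> (r == a) || (r == b) ->
  k2step_cost R (SA a b) r <= 0.
Proof.
move=> ab hr; rewrite /k2step_cost /= hr.
apply: le_trans (dcost_le r (gamma := [:: (1, ([fset a; b], [fset a; b]))]) _) _.
  coup.
rewrite !big_cons big_nil /= cost_in; last by rewrite in_fset2.
by rewrite /dist fsetDv cardfs0 mulr0 addr0.
Qed.

Lemma step_SA_move (R : realType) (P : choiceType) (a b r : P) :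
  a != b -> r != a -> r != b ->
  k2step_cost R (SA a b) r <= 1.
Proof.
move=> ab ra rb; rewrite /k2step_cost /= (negbTE ra) (negbTE rb) /=.
apply: le_trans (dcost_le r (gamma := [:: (2^-1, ([fset a; b], [fset r; a]));
   (2^-1, ([fset a; b], [fset r; b]))]) _) _.
  coup.
rewrite !big_cons big_nil /= !cost_in ?fset21 // !dist2 // !in_fset2 ?eqxx.
neqs; rewrite /=; lra.
Qed.

Lemma step_SB_a (R : realType) (P : choiceType) (a b c r : P) :
  r = a -> k2step_cost R (SB a b c) r <= 0.
Proof.
move=> ->; rewrite /k2step_cost /= eqxx.
apply: le_trans (dcost_le a (gamma := [:: (2^-1, ([fset a; b], [fset a; b]));
   (2^-1, ([fset a; c], [fset a; c]))]) _) _.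
  coup.
rewrite !big_cons big_nil /= !cost_in ?fset21 //.
by rewrite /dist !fsetDv cardfs0 !mulr0 !addr0.
Qed.

Lemma step_SB_b (R : realType) (P : choiceType) (a b c r : P) :
  a != b -> a != c -> b != c -> r = b -> k2step_cost R (SB a b c) r <= 2^-1.
Proof.
move=> ab ac bc ->; rewrite /k2step_cost /= eq_sym (negbTE ab) eqxx.
apply: le_trans (dcost_le b (gamma := [:: (2^-1, ([fset a; b], [fset b; a]));
   (2^-1, ([fset a; c], [fset b; a]))]) _) _.
  coup.
rewrite !big_cons big_nil /= !cost_in ?fset21 // !dist2 // !in_fset2 ?eqxx.
neqs; rewrite /= ?orbT /=; lra.
Qed.

Lemma step_SB_c (R : realType) (P : choiceType) (a b c r : P) :
  a != b -> a != c -> b != c -> r = c -> k2step_cost R (SB a b c) r <= 2^-1.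
Proof.
move=> ab ac bc ->; rewrite /k2step_cost /= eq_sym (negbTE ac) eq_sym (negbTE bc) eqxx.
apply: le_trans (dcost_le c (gamma := [:: (2^-1, ([fset a; b], [fset c; a]));
   (2^-1, ([fset a; c], [fset c; a]))]) _) _.
  coup.
rewrite !big_cons big_nil /= !cost_in ?fset21 // !dist2 // !in_fset2 ?eqxx.
neqs; rewrite /= ?orbT /=; lra.
Qed.

Lemma step_SB_d (R : realType) (P : choiceType) (a b c r : P) :
  a != b -> a != c -> b != c -> r != a -> r != b -> r != c ->
  k2step_cost R (SB a b c) r <= 1.
Proof.
move=> ab ac bc ra rb rc; rewrite /k2step_cost /= (negbTE ra) (negbTE rb) (negbTE rc).
apply: le_trans (dcost_le r (gamma := [:: (6^-1, ([fset a; b], [fset r; a]));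
   (3^-1, ([fset a; b], [fset r; b])); (6^-1, ([fset a; c], [fset r; a]));
   (3^-1, ([fset a; c], [fset r; c]))]) _) _.
  coup.
rewrite !big_cons big_nil /= !cost_in ?fset21 // !dist2 // !in_fset2 ?eqxx.
neqs; rewrite /= ?orbT /=; lra.
Qed.

Lemma M_SA (R : realType) (P : choiceType) (a b r u : P) :
  a != b -> u != r ->
  k2step_cost R (SA a b) r + EPhi R (SA a b) r [fset r; u] <= Phi R (SA a b) [fset r; u].
Proof.
move=> ab ur; rewrite /EPhi.
case hr: ((r == a) || (r == b)).
  have h := step_SA_stay R ab hr.
  rewrite /= hr big_cons big_nil /= mul1r addr0; lra.
move/negbT/norP: hr => [ra rb].
have h := step_SA_move R ab ra rb.
rewrite /= (negbTE ra) (negbTE rb) big_cons big_nil /= mul1r addr0.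
rewrite minE // !dist2 // !in_fset2 !natrD.
case: (eqVneq u a) => [->|ua]; [|case: (eqVneq u b) => [->|ub]];
  rewrite ?eqxx; neqs; rewrite /= ?orbT /=; lra.
Qed.

Lemma M_SB (R : realType) (P : choiceType) (a b c r u : P) :
  a != b -> a != c -> b != c -> u != r ->
  k2step_cost R (SB a b c) r + EPhi R (SB a b c) r [fset r; u] <= Phi R (SB a b c) [fset r; u].
Proof.
move=> ab ac bc ur; rewrite /EPhi.
case: (eqVneq r a) => [ra|ra].
  have h := step_SB_a R b c ra; subst r.
  rewrite /= eqxx big_cons big_nil /= mul1r addr0; lra.
case: (eqVneq r b) => [rb|rb].
  have h := step_SB_b R ab ac bc rb; subst r.
  rewrite /= (negbTE ra) eqxx big_cons big_nil /= mul1r addr0.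
  rewrite minE // !dist2 ?(neqC ab) // !in_fset2 !natrD.
  case: (eqVneq u a) => [->|ua]; [|case: (eqVneq u c) => [->|uc]];
    rewrite ?eqxx; neqs; rewrite /= ?orbT /=; lra.
case: (eqVneq r c) => [rc|rc].
  have h := step_SB_c R ab ac bc rc; subst r.
  rewrite /= (negbTE ra) (negbTE rb) eqxx big_cons big_nil /= mul1r addr0.
  rewrite minE // !dist2 ?(neqC ac) // !in_fset2 !natrD.
  case: (eqVneq u a) => [->|ua]; [|case: (eqVneq u b) => [->|ub]];
    rewrite ?eqxx; neqs; rewrite /= ?orbT /=; lra.
have h := step_SB_d R ab ac bc ra rb rc.
rewrite /= (negbTE ra) (negbTE rb) (negbTE rc) !big_cons big_nil /= addr0.
rewrite minE // !dist2 // !in_fset2 !natrD.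
case: (eqVneq u a) => [->|ua]; [|case: (eqVneq u b) => [->|ub]];
  [| |case: (eqVneq u c) => [->|uc]];
  rewrite ?eqxx; neqs; rewrite /= ?orbT /=; lra.
Qed.

Lemma M_gen (R : realType) (P : choiceType) (s : k2state P) r z :
  wf s -> is_conf2 z -> r \in z ->
  k2step_cost R s r + EPhi R s r z <= Phi R s z.
Proof.
move=> ws /conf2_pair [p [q [pq ->]]] /fset2P [] ->.
  case: s ws => [a b|a b c] /=.
    by move=> ab; apply: M_SA; rewrite // eq_sym.
  by case/and3P=> ab ac bc; apply: M_SB; rewrite // eq_sym.
rewrite fsetUC.
case: s ws => [a b|a b c] /=.
  by move=> ab; apply: M_SA.
by case/and3P=> ab ac bc; apply: M_SB.
Qed.

Lemma Phi_ge0 (R : realType) (P : choiceType) (s : k2state P) y : 0 <= Phi R s y.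
Proof.
case: s => [a b|a b c] /=.
  by apply: mulr_ge0; [lra | apply: ler0n].
apply: addr_ge0; last by rewrite invr_ge0 ler0n.
by apply: mulr_ge0; [lra | apply: ler0n].
Qed.

Lemma main_ind (R : realType) (P : choiceType) (rho : seq P) :
  forall (s : k2state P) x xs, wf s -> is_conf2 x -> size xs = size rho -> all (@is_conf2 P) xs ->
  k2_expected_cost R s rho <= 3 / 2 * sched_cost R x rho xs + Phi R s x.
Proof.
elim: rho => [|r rho IH] s x [|y xs] //= ws cx.
- by move=> _ _; rewrite mulr0 add0r Phi_ge0.
- move=> [hs] /andP [cy cxs].
  have [w0 w1 wall] := trans_props R r ws.
  have h1 : \sum_(p <- k2trans R s r) p.1 * k2_expected_cost R p.2 rho <=
            \sum_(p <- k2trans R s r) p.1 * (3 / 2 * sched_cost R y rho xs + Phi R p.2 y).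
    apply: ler_sum_all.
    have : all (predI (fun p : R * k2state P => 0 <= p.1) (fun p => wf p.2)) (k2trans R s r)
      by rewrite all_predI w0 wall.
    apply: sub_all => p /andP [p0 wp] /=.
    by apply: ler_wpM2l => //; apply: IH.
  have e : \sum_(p <- k2trans R s r) p.1 * (3 / 2 * sched_cost R y rho xs + Phi R p.2 y) =
           3 / 2 * sched_cost R y rho xs + EPhi R s r y.
    rewrite (eq_bigr (fun p => p.1 * (3 / 2 * sched_cost R y rho xs) + p.1 * Phi R p.2 y));
      last by move=> p _; rewrite mulrDr.
    by rewrite big_split /= -mulr_suml w1 mul1r.
  have h2 : k2step_cost R s r + EPhi R s r y <= 3 / 2 * cost R x r y + Phi R s x.
    apply: key cx cy.
    - by move=> z cz rz; apply: M_gen.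
    - by move=> u v; apply: EPhi_lip.
    - by move=> u v; apply: Phi_lip.
  rewrite e in h1; lra.
Qed.

Theorem mainTheorem10 (R : realType) (P : choiceType)
  (P_infinite : forall s : seq P, exists p : P, p \notin s)
  (a b : P) (hab : a != b) :
  exists K : R, forall rho : seq P,
    k2_expected_cost R (SA a b) rho
      <= 3 / 2 * cost_opt R ([fset a; b]%fset) rho + K.
Proof.
exists 0 => rho; rewrite addr0.
set k := k2_expected_cost R (SA a b) rho.
have c2 : is_conf2 [fset a; b] by rewrite /is_conf2 cardfs2 hab.
suff : 2 / 3 * k <= cost_opt R [fset a; b] rho by lra.
apply: lb_le_inf.
  exists (sched_cost R [fset a; b] rho (nseq (size rho) [fset a; b])).
  exists (nseq (size rho) [fset a; b]); split => //; first by rewrite size_nseq.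
  by rewrite all_nseq c2 orbT.
move=> c [xs [hs ha ->]].
have := @main_ind R P rho (SA a b) [fset a; b] xs hab c2 hs ha.
rewrite /= /dist fsetDv cardfs0 mulr0 addr0 => h; rewrite /k; lra.
Qed.
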